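(* Let $n \ge 1$ and let $N$ be a $\lambda$-term such that $N a_1 a_2 \ldots a_n =_\beta a_1 a_2 \ldots a_n (N a_1 a_2 \ldots a_n)$ for distinct variables $a_1,\dots,a_n$ not free in $N$. Then $N\mathbf{I}\cdots\mathbf{I}$, with $n-1$ copies of $\mathbf{I}\equiv\lambda x.x$, is a fixed point combinator.
   Context: Untyped $\lambda$-calculus modulo $\alpha$-conversion; application associates to the left, so $a_1a_2\ldots a_n(P)$ means $(\cdots(a_1a_2)\cdots a_n)P$. A term $Y$ is a fixed point combinator if $Yx =_\beta x(Yx)$ for a variable $x$ not free in $Y$. *)

(* Defs.v *)
(* Untyped lambda calculus with de Bruijn indices:
   terms are taken modulo alpha-conversion; free variables are the free indices. *)
From mathcomp Require Import all_boot.
Set Implicit Arguments. Unset Strict Implicit. Unset Printing Implicit Defensive.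

Inductive term : Type :=
| Var of nat
| App of term & term
| Lam of term.

Fixpoint liftn (d c : nat) (t : term) : term :=
  match t with
  | Var i => Var (if i < c then i else i + d)
  | App a b => App (liftn d c a) (liftn d c b)
  | Lam a => Lam (liftn d c.+1 a)
  end.

Fixpoint subst (k : nat) (u : term) (t : term) : term :=
  match t with
  | Var i => if i < k then Var i else if i == k then liftn k 0 u else Var i.-1
  | App a b => App (subst k u a) (subst k u b)
  | Lam a => Lam (subst k.+1 u a)
  end.

Inductive beta1 : term -> term -> Prop :=
| beta1_redex t u : beta1 (App (Lam t) u) (subst 0 u t)
| beta1_appl a a' b : beta1 a a' -> beta1 (App a b) (App a' b)
| beta1_appr a b b' : beta1 b b' -> beta1 (App a b) (App a b')
| beta1_lam a a' : beta1 a a' -> beta1 (Lam a) (Lam a').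

Inductive beta_eq : term -> term -> Prop :=
| beq_step a b : beta1 a b -> beta_eq a b
| beq_refl a : beta_eq a a
| beq_sym a b : beta_eq a b -> beta_eq b a
| beq_trans a b c : beta_eq a b -> beta_eq b c -> beta_eq a c.

Fixpoint free (x : nat) (t : term) : bool :=
  match t with
  | Var i => i == x
  | App a b => free x a || free x b
  | Lam a => free x.+1 a
  end.

Definition apps (t : term) (s : seq term) : term := foldl App t s.

Definition I_comb : term := Lam (Var 0).

Definition fpc (Y : term) : Prop :=
  forall x : nat, ~~ free x Y -> beta_eq (App Y (Var x)) (App (Var x) (App Y (Var x))).

(* Main.v *)
Require Import Defs.
From mathcomp Require Import all_boot.

Fixpoint ren (f : nat -> nat) (t : term) : term :=
  match t with
  | Var i => Var (f i)
  | App a b => App (ren f a) (ren f b)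
  | Lam a => Lam (ren (fun i => if i is j.+1 then (f j).+1 else 0) a)
  end.

Definition upren (f : nat -> nat) := fun i => if i is j.+1 then (f j).+1 else 0.

Definition up (s : nat -> term) := fun i => if i is j.+1 then ren S (s j) else Var 0.

Fixpoint sub (s : nat -> term) (t : term) : term :=
  match t with
  | Var i => s i
  | App a b => App (sub s a) (sub s b)
  | Lam a => Lam (sub (up s) a)
  end.

Lemma ren_ext f g t : (forall i, f i = g i) -> ren f t = ren g t.
Proof.
elim: t f g => [i|a IHa b IHb|a IHa] f g H /=; first by rewrite H.
  by rewrite (IHa f g) // (IHb f g).
by rewrite (IHa _ (upren g)) // => -[|i] //=; rewrite H.
Qed.

Lemma sub_ext f g t : (forall i, f i = g i) -> sub f t = sub g t.
Proof.
elim: t f g => [i|a IHa b IHb|a IHa] f g H /=; first by rewrite H.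
  by rewrite (IHa f g) // (IHb f g).
by rewrite (IHa _ (up g)) // => -[|i] //=; rewrite H.
Qed.

Lemma ren_ren f g t : ren f (ren g t) = ren (f \o g) t.
Proof.
elim: t f g => [i|a IHa b IHb|a IHa] f g //=; first by rewrite IHa IHb.
by rewrite IHa; congr Lam; apply: ren_ext => -[|i].
Qed.

Lemma ren_sub f t : ren f t = sub (Var \o f) t.
Proof.
elim: t f => [i|a IHa b IHb|a IHa] f //=; first by rewrite IHa IHb.
by rewrite IHa; congr Lam; apply: sub_ext => -[|i].
Qed.

Lemma sub_ren s f t : sub s (ren f t) = sub (s \o f) t.
Proof.
elim: t s f => [i|a IHa b IHb|a IHa] s f //=; first by rewrite IHa IHb.
by rewrite IHa; congr Lam; apply: sub_ext => -[|i].
Qed.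

Lemma ren_sub2 f s t : ren f (sub s t) = sub (ren f \o s) t.
Proof.
elim: t f s => [i|a IHa b IHb|a IHa] f s //=; first by rewrite IHa IHb.
rewrite IHa; congr Lam; apply: sub_ext => -[|i] //=.
by rewrite !ren_ren; apply: ren_ext.
Qed.

Lemma sub_sub s r t : sub s (sub r t) = sub (sub s \o r) t.
Proof.
elim: t s r => [i|a IHa b IHb|a IHa] s r //=; first by rewrite IHa IHb.
rewrite IHa; congr Lam; apply: sub_ext => -[|i] //=.
by rewrite sub_ren ren_sub2; apply: sub_ext.
Qed.

Lemma sub_id t : sub Var t = t.
Proof.
elim: t => [i|a IHa b IHb|a IHa] //=; first by rewrite IHa IHb.
by rewrite (@sub_ext _ Var) ?IHa // => -[|i].
Qed.

Lemma liftn_ren d c t : liftn d c t = ren (fun i => if i < c then i else i + d) t.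
Proof.
elim: t c => [i|a IHa b IHb|a IHa] c //=; first by rewrite IHa IHb.
by rewrite IHa; congr Lam; apply: ren_ext => -[|i] //=; rewrite ltnS; case: ifP.
Qed.

Definition sk k u := fun i => if i < k then Var i else if i == k then liftn k 0 u else Var i.-1.

Lemma subst_sub k u t : subst k u t = sub (sk k u) t.
Proof.
elim: t k => [i|a IHa b IHb|a IHa] k //=; first by rewrite IHa IHb.
rewrite IHa; congr Lam; apply: sub_ext => -[|i] //=.
rewrite /sk /= ltnS eqSS; case: ltnP => // Hk; case: eqP => //= Hne.
  by rewrite !liftn_ren ren_ren; apply: ren_ext => j /=; rewrite addnS.
by case: i Hk Hne => [|i] //=; rewrite leqn0 => /eqP ->.
Qed.

Definition scons (u : term) (s : nat -> term) := fun i => if i is j.+1 then s j else u.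

Lemma subst0 u t : subst 0 u t = sub (scons u Var) t.
Proof.
rewrite subst_sub; apply: sub_ext => -[|i] //=.
by rewrite /sk /= liftn_ren -[RHS]sub_id ren_sub; apply: sub_ext => j /=; rewrite addn0.
Qed.

Lemma beta1_sub a b s : beta1 a b -> beta1 (sub s a) (sub s b).
Proof.
move=> H; elim: H s => [t u|a0 a' b0 _ IH|a0 b0 b' _ IH|a0 a' _ IH] s /=;
  try by constructor.
rewrite !subst0 !sub_sub.
have -> : sub (sub s \o scons u Var) t = subst 0 (sub s u) (sub (up s) t).
  rewrite subst0 sub_sub; apply: sub_ext => -[|i] //=.
  by rewrite sub_ren -[LHS]sub_id; apply: sub_ext.
exact: beta1_redex.
Qed.

Lemma beta_eq_sub a b s : beta_eq a b -> beta_eq (sub s a) (sub s b).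
Proof.
elim=> [a0 b0 H|a0|a0 b0 _ IH|a0 b0 c0 _ IH1 _ IH2].
- by apply: beq_step; apply: beta1_sub.
- exact: beq_refl.
- exact: beq_sym.
- exact: beq_trans IH2.
Qed.

Lemma beta_eq_appl a a' b : beta_eq a a' -> beta_eq (App a b) (App a' b).
Proof.
elim=> [a0 b0 H|a0|a0 b0 _ IH|a0 b0 c0 _ IH1 _ IH2].
- by apply: beq_step; apply: beta1_appl.
- exact: beq_refl.
- exact: beq_sym.
- exact: beq_trans IH2.
Qed.

Lemma sub_free s t : (forall i, free i t -> s i = Var i) -> sub s t = t.
Proof.
elim: t s => [i|a IHa b IHb|a IHa] s H /=.
- by apply: H => /=.
- by rewrite IHa ?IHb // => i Hi; apply: H => /=; rewrite Hi ?orbT.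
- rewrite IHa // => -[|i] //= Hi.
  by rewrite H.
Qed.

Lemma sub_apps s t l : sub s (apps t l) = apps (sub s t) (map (sub s) l).
Proof. by elim: l t => [|x l IH] t //=; rewrite /apps /= -/(apps _ _) IH. Qed.

Lemma apps_rcons t l x : apps t (rcons l x) = App (apps t l) x.
Proof. by rewrite /apps foldl_rcons. Qed.

Lemma apps_I k : beta_eq (apps I_comb (nseq k I_comb)) I_comb.
Proof.
elim: k => [|k IH]; first exact: beq_refl.
rewrite -[nseq k.+1 _]/(nseq k.+1 I_comb) -addn1 nseqD cats1 apps_rcons.
apply: (beq_trans (beta_eq_appl _ _ _ IH)).
by apply: beq_step; apply: (beta1_redex (Var 0) I_comb).
Qed.

Theorem proposition3p10 (n : nat) (N : term) (a : seq nat) :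
  1 <= n -> size a = n -> uniq a -> all (fun x => ~~ free x N) a ->
  beta_eq (apps N (map Var a))
          (App (apps (Var (head 0 a)) (map Var (behead a))) (apps N (map Var a))) ->
  fpc (apps N (nseq n.-1 I_comb)).
Proof.
move=> Hn Hsz Hu Hall H x _.
set sq := rcons (nseq n.-1 I_comb) (Var x).
pose s := fun i => if i \in a then nth I_comb sq (index i a) else Var i.
have Hsq : size sq = n by rewrite size_rcons size_nseq prednK.
have Hmap : map s a = sq.
  apply: (@eq_from_nth _ I_comb); first by rewrite size_map Hsz.
  move=> k; rewrite size_map => Hk.
  by rewrite (nth_map 0) // /s mem_nth // index_uniq.
have HN : sub s N = N.
  apply: sub_free => i Hi; rewrite /s; case: ifP => // Ha.
  by move/allP: Hall => /(_ i Ha); rewrite Hi.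
move/(beta_eq_sub _ _ s): H; rewrite /= !sub_apps HN -!map_comp /=.
have -> : map (sub s \o Var) a = sq by rewrite -Hmap.
rewrite /sq apps_rcons -/sq.
have -> : map (sub s \o Var) (behead a) = behead sq by rewrite -Hmap -behead_map.
have -> : s (head 0 a) = head I_comb sq.
  by rewrite -Hmap; case: (a) Hsz Hn => [<-|] //.
move=> H; apply: (beq_trans H); apply: beta_eq_appl.
rewrite /sq; case: (n.-1) => [|k] /=; first exact: beq_refl.
rewrite apps_rcons.
apply: (beq_trans (beta_eq_appl _ _ _ (apps_I k))).
apply: beq_step.
have := beta1_redex (Var 0) (Var x); rewrite /= addn0; exact.
Qed.
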